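(* For every $n\ge2$ and every $n\times n$ Hermitian matrix $A$, $Y_{n,n-1}(A)\succ X_{n-1}(A)$; that is, the concatenation of $n-1$ copies of $\lambda(A)$ majorizes the vector of all eigenvalues of all $(n-1)\times(n-1)$ principal submatrices of $A$.
   Context: $\lambda(A)$ denotes the vector of eigenvalues of $A$ with multiplicity. For $1\le m\le n$, $X_m(A)$ is the vector listing the eigenvalues, with multiplicity, of all $\binom nm$ principal $m\times m$ submatrices of $A$, and $Y_{n,m}(A)$ is the concatenation of $\binom{n-1}{m-1}$ copies of $\lambda(A)$. For $x,y\in\mathbb R^N$, $x\succ y$ means $\sum_{i=1}^k x^{\downarrow}_i\ge\sum_{i=1}^k y^{\downarrow}_i$ for $k=1,\dots,N$ with equality at $k=N$, where $x^{\downarrow}$ is the non-increasing rearrangement. *)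

(* Defs.v *)
From HB Require Import structures.
From mathcomp Require Import all_boot all_order all_algebra.
From mathcomp Require Import complex.
Set Implicit Arguments. Unset Strict Implicit. Unset Printing Implicit Defensive.
Import Order.TTheory GRing.Theory Num.Theory.
Local Open Scope ring_scope.
Local Open Scope complex_scope.

Definition is_hermitian (R : rcfType) (n : nat) (A : 'M[R[i]]_n) : Prop :=
  A^T = map_mx (@conjc R) A.

(* [s] lists the eigenvalues of A with (algebraic) multiplicity, i.e. the
   roots of the characteristic polynomial counted with multiplicity;
   the eigenvalues are given as real numbers (embedded by x%:C). *)
Definition eigenvalues_of (R : rcfType) (n : nat) (A : 'M[R[i]]_n)
    (s : seq R) : Prop :=
  char_poly A = \prod_(x <- s) ('X - (x%:C)%:P).

Definition del_sub (C : Type) (n : nat) (A : 'M[C]_n) (i : 'I_n) : 'M[C]_n.-1 :=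
  row' i (col' i A).

Definition desc (R : realDomainType) (s : seq R) : seq R := sort (>=%R) s.

Definition majorizes (R : realDomainType) (x y : seq R) : Prop :=
  size x = size y /\
  (forall k, (k <= size x)%N ->
     \sum_(i < k) (desc y)`_i <= \sum_(i < k) (desc x)`_i) /\
  \sum_(i < size x) (desc x)`_i = \sum_(i < size y) (desc y)`_i.

(* Main.v *)
Require Import Defs.
From mathcomp Require Import all_boot all_order all_algebra.
From mathcomp Require Import complex.
From mathcomp Require Import spectral sesquilinear.
Import Order.TTheory GRing.Theory Num.Theory.
Local Open Scope ring_scope.
Module Helpers.
Import Num.Def.
Set Implicit Arguments. Unset Strict Implicit. Unset Printing Implicit Defensive.
Local Open Scope ring_scope.
Local Open Scope sesquilinear_scope.
Local Open Scope complex_scope.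

Section Maj.
Variable R : realDomainType.

Definition fpos (t x : R) : R := Order.max (x - t) 0.

Lemma fpos_ge0 t x : 0 <= fpos t x.
Proof. by rewrite /fpos le_max lexx orbT. Qed.

Lemma fpos_ge t x : x - t <= fpos t x.
Proof. by rewrite /fpos le_max lexx. Qed.

Lemma fpos_eq0 t x : x <= t -> fpos t x = 0.
Proof. by move=> h; apply/eqP; rewrite eq_le fpos_ge0 /fpos ge_max lexx subr_le0 h. Qed.

Lemma fpos_eq t x : t <= x -> fpos t x = x - t.
Proof. by move=> h; apply/eqP; rewrite eq_le fpos_ge /fpos ge_max lexx subr_ge0 h. Qed.

Lemma sum_nthE (G : R -> R) (s : seq R) :
  \sum_(i < size s) G s`_i = \sum_(v <- s) G v.
Proof. by rewrite (big_nth 0) big_mkord. Qed.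

Lemma sum_desc (G : R -> R) (s : seq R) :
  \sum_(i < size s) G (desc s)`_i = \sum_(v <- s) G v.
Proof.
rewrite -(size_sort (>=%R)) -/(desc s) sum_nthE.
by apply: perm_big; rewrite /desc perm_sort.
Qed.

Lemma partial_upper (s : seq R) k t : (k <= size s)%N ->
  \sum_(i < k) s`_i <= k%:R * t + \sum_(i < size s) fpos t s`_i.
Proof.
move=> ks.
have -> : \sum_(i < size s) fpos t s`_i =
   \sum_(i < size s | (i < k)%N) fpos t s`_i + \sum_(i < size s | ~~ (i < k)%N) fpos t s`_i.
  by rewrite (bigID (fun i : 'I_(size s) => (i < k)%N)).
rewrite -(big_ord_widen _ (fun i => fpos t s`_i) ks).
apply: (@le_trans _ _ (k%:R * t + \sum_(i < k) fpos t s`_i)).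
  rewrite mulr_natl.
  have -> : t *+ k = \sum_(i < k) t by rewrite sumr_const card_ord.
  rewrite -big_split /=.
  by apply: ler_sum => i _; rewrite -lerBlDl fpos_ge.
by rewrite addrA lerDl sumr_ge0 // => i _; apply: fpos_ge0.
Qed.

Lemma partial_sorted (s : seq R) k : sorted (>=%R) s -> (0 < k <= size s)%N ->
  \sum_(i < k) s`_i = k%:R * s`_k.-1 + \sum_(i < size s) fpos s`_k.-1 s`_i.
Proof.
move=> ss /andP[k0 ks]; set t := s`_k.-1.
have hnth : forall i j, (i <= j)%N -> (j < size s)%N -> s`_j <= s`_i.
  move=> i j ij js.
  have := @sorted_leq_nth _ (>=%R) _ _ 0 s ss i j; apply => //.
  - by move=> a b c /= h1 h2; apply: le_trans h2 h1.
  - by move=> a /=.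
  - by rewrite inE (leq_ltn_trans ij js).
rewrite (bigID (fun i : 'I_(size s) => (i < k)%N)) /=.
rewrite [X in _ + (_ + X)]big1 ?addr0; last first.
  move=> i; rewrite -leqNgt => ki; apply: fpos_eq0; apply: hnth => //.
  by rewrite (leq_trans _ ki) // leq_pred.
rewrite -(big_ord_widen _ (fun i => fpos t s`_i) ks).
rewrite mulr_natl.
have -> : t *+ k = \sum_(i < k) t by rewrite sumr_const card_ord.
rewrite -big_split /=.
apply: eq_bigr => i _; rewrite fpos_eq; first by rewrite addrC subrK.
apply: hnth; last by rewrite (leq_trans _ ks) // prednK.
by rewrite -ltnS prednK.
Qed.

Lemma maj_of_conv (x y : seq R) :
  size x = size y -> \sum_(v <- x) v = \sum_(v <- y) v ->
  (forall t, \sum_(v <- y) fpos t v <= \sum_(v <- x) fpos t v) ->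
  majorizes x y.
Proof.
move=> sz tot hf; split => //; split; last first.
  by rewrite (sum_desc id) (sum_desc id).
move=> k kx.
case: k kx => [|k] kx; first by rewrite !big_ord0.
have sx : sorted (>=%R) (desc x).
  by apply: sort_sorted => a b; exact: le_total.
rewrite (@partial_sorted (desc x) k.+1 sx) ?size_sort // /=.
set t := (desc x)`_k.
apply: le_trans (@partial_upper (desc y) k.+1 t _) _; first by rewrite size_sort -sz.
rewrite lerD2l /desc size_sort -/(desc y) (sum_desc (fpos t)) (sum_desc (fpos t)).
exact: hf.
Qed.

End Maj.


Section Abs.
Variable R : realDomainType.

Lemma jensen_fpos (N : nat) (w x : 'I_N -> R) t :
  (forall m, 0 <= w m) -> \sum_m w m = 1 ->
  fpos t (\sum_m w m * x m) <= \sum_m w m * fpos t (x m).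
Proof.
move=> w0 w1; rewrite /fpos ge_max; apply/andP; split; last first.
  by apply: sumr_ge0 => m _; apply: mulr_ge0 => //; apply: fpos_ge0.
rewrite [X in _ - X <= _](_ : t = \sum_m w m * t); last by rewrite -mulr_suml w1 mul1r.
rewrite -sumrB; apply: ler_sum => m _; rewrite -mulrBr.
by apply: ler_wpM2l => //; apply: fpos_ge.
Qed.

Lemma sum_nseq_flat (G : R -> R) c (s : seq R) :
  \sum_(v <- flatten (nseq c s)) G v = (\sum_(v <- s) G v) *+ c.
Proof.
elim: c => [|c IH]; first by rewrite big_nil.
by rewrite /= big_cat IH mulrS.
Qed.

Lemma abstract_maj (N K c : nat) (I : finType) (lam : seq R) (dr : 'I_N -> R)
  (mu : I -> seq R) (dri : I -> 'I_K -> R) (w : I -> 'I_K -> 'I_N -> R) :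
  (#|I| * K = c * N)%N ->
  perm_eq lam [seq dr m | m <- enum 'I_N] ->
  (forall i, perm_eq (mu i) [seq dri i j | j <- enum 'I_K]) ->
  (forall i j m, 0 <= w i j m) ->
  (forall i j, \sum_m w i j m = 1) ->
  (forall m, \sum_i \sum_j w i j m = c%:R) ->
  (forall i j, dri i j = \sum_m w i j m * dr m) ->
  majorizes (flatten (nseq c lam)) (flatten [seq mu i | i <- enum I]).
Proof.
move=> card plam pmu w0 w1 wc dE.
have sumX : forall G : R -> R, \sum_(v <- flatten (nseq c lam)) G v
    = (\sum_m G (dr m)) *+ c.
  move=> G; rewrite sum_nseq_flat (perm_big _ plam) big_map.
  by rewrite big_enum.
have sumY : forall G : R -> R, \sum_(v <- flatten [seq mu i | i <- enum I]) G v
    = \sum_i \sum_j G (dri i j).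
  move=> G; rewrite big_flatten big_map big_enum /=.
  apply: eq_bigr => i _; rewrite (perm_big _ (pmu i)) big_map big_enum //.
have comb : forall G : R -> R,
    \sum_i \sum_j \sum_m w i j m * G (dr m) = (\sum_m G (dr m)) *+ c.
  move=> G; under eq_bigr do rewrite exchange_big /=.
  rewrite exchange_big /= -mulr_natl mulr_sumr.
  apply: eq_bigr => m _; rewrite -(wc m) mulr_suml.
  by apply: eq_bigr => i _; rewrite mulr_suml.
apply: maj_of_conv.
- rewrite !size_flatten /shape map_nseq sumn_nseq (perm_size plam) size_map.
  rewrite size_enum_ord -map_comp sumnE big_map big_enum /=.
  under eq_bigr do rewrite (perm_size (pmu _)) size_map size_enum_ord.
  by rewrite sum_nat_const card mulnC.
- rewrite (sumX id) (sumY id) -(comb id).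
  by apply: eq_bigr => i _; apply: eq_bigr => j _; rewrite dE.
- move=> t; rewrite (sumX (fpos t)) (sumY (fpos t)) -(comb (fpos t)).
  apply: ler_sum => i _; apply: ler_sum => j _; rewrite dE.
  exact: jensen_fpos.
Qed.

End Abs.


Lemma char_poly_simil (F : comUnitRingType) n (P D : 'M[F]_n) :
  P \in unitmx -> char_poly (invmx P *m D *m P) = char_poly D.
Proof.
move=> Pu; rewrite /char_poly /char_poly_mx.
set Pi := map_mx polyC (invmx P); set Q := map_mx polyC P.
have QiQ : Pi *m Q = 1%:M by rewrite /Pi /Q -map_mxM mulVmx // map_mx1.
have -> : 'X%:M - map_mx polyC (invmx P *m D *m P)
    = Pi *m ('X%:M - map_mx polyC D) *m Q.
  rewrite mulmxBr mulmxBl !map_mxM -/Pi -/Q [Pi *m 'X%:M]scalar_mxC -['X%:M *m Pi *m Q]mulmxA QiQ mulmx1 //.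
by rewrite !det_mulmx mulrAC -det_mulmx QiQ det1 mul1r.
Qed.

Lemma eig_diag (F : fieldType) n (P : 'M[F]_n) (d : 'rV[F]_n) (s : seq F) :
  P \in unitmx ->
  char_poly (invmx P *m diag_mx d *m P) = \prod_(x <- s) ('X - x%:P) ->
  perm_eq s [seq d 0 m | m <- enum 'I_n].
Proof.
move=> Pu; rewrite char_poly_simil // char_poly_trig ?diag_mx_is_trig // => h.
apply: prod_XsubC_eq; rewrite -h big_map big_enum /=.
by apply: eq_bigr => m _; rewrite mxE eqxx mulr1n.
Qed.


Section Mx.
Variable C : numClosedFieldType.

Lemma sum_delta_l n (x : 'I_n) (F : 'I_n -> C) :
  \sum_e (e == x)%:R * F e = F x.
Proof.
rewrite (bigD1 x) //= eqxx mul1r big1 ?addr0 // => e /negbTE ->.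
by rewrite mul0r.
Qed.

Lemma sum_delta_r n (x : 'I_n) (F : 'I_n -> C) :
  \sum_e F e * (e == x)%:R = F x.
Proof.
by rewrite -[RHS](sum_delta_l x); apply: eq_bigr => e _; rewrite mulrC.
Qed.

Definition selm n (i : 'I_n) : 'M[C]_(n.-1, n) :=
  \matrix_(a, b) ((b == lift i a)%:R).

Lemma del_subE n (A : 'M[C]_n) i :
  del_sub A i = selm i *m A *m (selm i)^T.
Proof.
apply/matrixP => a b; rewrite !mxE.
under eq_bigr do rewrite !mxE.
rewrite sum_delta_r; under eq_bigr do rewrite mxE.
by rewrite sum_delta_l.
Qed.

Lemma selm_selmT n (i : 'I_n) : selm i *m (selm i)^T = 1%:M.
Proof.
apply/matrixP => a b; rewrite !mxE.
under eq_bigr do rewrite !mxE.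
by rewrite sum_delta_r (inj_eq lift_inj) eq_sym.
Qed.

Lemma selmT_selm_entry n (i : 'I_n) c e :
  ((selm i)^T *m selm i) c e = ((c == e) && (c != i))%:R.
Proof.
rewrite !mxE; under eq_bigr do rewrite !mxE.
case: (unliftP i c) => [j ->|->].
  under eq_bigr do rewrite (inj_eq lift_inj).
  rewrite (eq_bigr (fun a => (a == j)%:R * (e == lift i a)%:R)); last first.
    by move=> a _; rewrite eq_sym.
  by rewrite sum_delta_l (eq_sym (lift i j) i) (negbTE (neq_lift i j)) andbT eq_sym.
rewrite eqxx andbF big1 // => a _.
by rewrite (negbTE (neq_lift i a)) mul0r.
Qed.

Lemma sum_selmT_selm n :
  \sum_(i < n) ((selm i)^T *m selm i) = (n.-1)%:R%:M.
Proof.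
apply/matrixP => c e; rewrite summxE !mxE.
under eq_bigr do rewrite selmT_selm_entry.
have n0 : (0 < n)%N by rewrite (leq_ltn_trans _ (ltn_ord c)).
have [ce|ne] := eqVneq c e; last by rewrite big1 // => i _; rewrite (negbTE ne).
rewrite /=.
have -> : \sum_(i < n) ((c != i)%:R : C) = \sum_(i < n) (1 - (i == c)%:R).
  by apply: eq_bigr => i _; rewrite eq_sym; case: (i == c); rewrite ?subrr ?subr0.
rewrite sumrB sumr_const card_ord.
rewrite (eq_bigr (fun i => (i == c)%:R * 1)); last by move=> i _; rewrite mulr1.
rewrite sum_delta_l -[in LHS](prednK n0) mulrSr addrK.
by rewrite mulr1n.
Qed.

Lemma unitary_sq n (P : 'M[C]_n) : P \is unitarymx ->
  P *m P^t* = 1%:M /\ P^t* *m P = 1%:M.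
Proof. by move=> /unitarymxP h; split => //; apply: mulmx1C. Qed.

Lemma selm_conj n (i : 'I_n) : (selm i)^t* = (selm i)^T.
Proof.
by apply/matrixP => a b; rewrite !mxE; case: (_ == _); rewrite ?conjC0 ?conjC1.
Qed.

Lemma herm_del n (A : 'M[C]_n) i : A \is hermsymmx -> del_sub A i \is hermsymmx.
Proof.
move=> /is_hermitianmxP hA; apply/is_hermitianmxP.
apply/matrixP => a b.
have := congr1 (fun M : 'M_n => M (lift i a) (lift i b)) hA.
by rewrite /= !mxE.
Qed.

End Mx.


Section Key.
Variable C : numClosedFieldType.

Lemma E1 m k (X : 'M[C]_(m, k)) (d : 'rV_k) j :
  (X *m diag_mx d *m X^t*) j j = \sum_l (X j l * conjC (X j l)) * d 0 l.
Proof.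
rewrite mul_mx_diag !mxE; apply: eq_bigr => l _; rewrite !mxE.
by rewrite mulrAC.
Qed.

Lemma E2 m k (X : 'M[C]_(m, k)) j :
  (X *m X^t*) j j = \sum_l X j l * conjC (X j l).
Proof. by rewrite !mxE; apply: eq_bigr => l _; rewrite !mxE. Qed.

Lemma E3 m k (X : 'M[C]_(m, k)) l :
  (X^t* *m X) l l = \sum_j X j l * conjC (X j l).
Proof. by rewrite !mxE; apply: eq_bigr => j _; rewrite !mxE mulrC. Qed.

Variables (n : nat) (A : 'M[C]_n).
Hypothesis hA : A \is hermsymmx.

Definition Mi (i : 'I_n) : 'M[C]_(n.-1, n) :=
  spectralmx (del_sub A i) *m selm C i *m (spectralmx A)^t*.

Lemma spec_herm n' (B : 'M[C]_n') : B \is hermsymmx ->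
  B = (spectralmx B)^t* *m diag_mx (spectral_diag B) *m spectralmx B.
Proof.
move=> hB; have /orthomx_spectralP E := hermitian_normalmx hB.
by rewrite -invmx_unitary ?spectral_unitarymx.
Qed.

Lemma Mi_adj i : (Mi i)^t* =
  spectralmx A *m (selm C i)^T *m (spectralmx (del_sub A i))^t*.
Proof.
rewrite /Mi !trmx_mul !map_mxM trmxCK.
have -> : ((selm C i)^T ^ conjC) = (selm C i)^T by apply: selm_conj.
by rewrite mulmxA.
Qed.

Lemma K1 i : diag_mx (spectral_diag (del_sub A i)) =
  Mi i *m diag_mx (spectral_diag A) *m (Mi i)^t*.
Proof.
set Q := spectralmx (del_sub A i).
have [QQ1 QQ2] := unitary_sq (spectral_unitarymx (del_sub A i)).
have -> : diag_mx (spectral_diag (del_sub A i)) = Q *m del_sub A i *m Q^t*.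
  rewrite [in RHS](spec_herm (herm_del i hA)) -/Q.
  by rewrite !mulmxA QQ1 mul1mx -mulmxA QQ1 mulmx1.
rewrite Mi_adj /Mi -/Q del_subE [in LHS](spec_herm hA).
by rewrite !mulmxA.
Qed.

Lemma K2 i : Mi i *m (Mi i)^t* = 1%:M.
Proof.
have [QQ1 QQ2] := unitary_sq (spectral_unitarymx (del_sub A i)).
have [PP1 PP2] := unitary_sq (spectral_unitarymx A).
rewrite Mi_adj /Mi -!mulmxA (mulmxA _ (spectralmx A)) PP2 mul1mx.
by rewrite (mulmxA (selm C i)) selm_selmT mul1mx QQ1.
Qed.

Lemma K3 : \sum_i ((Mi i)^t* *m Mi i) = (n.-1)%:R%:M.
Proof.
have [PP1 PP2] := unitary_sq (spectral_unitarymx A).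
rewrite (eq_bigr (fun i => spectralmx A *m ((selm C i)^T *m selm C i)
    *m (spectralmx A)^t*)); last first.
  move=> i _; have [QQ1 QQ2] := unitary_sq (spectral_unitarymx (del_sub A i)).
  rewrite Mi_adj /Mi -!mulmxA (mulmxA _ (spectralmx (del_sub A i))) QQ2 mul1mx.
  by rewrite !mulmxA.
rewrite -mulmx_suml -mulmx_sumr sum_selmT_selm mul_mx_scalar -scalemxAl PP1.
by rewrite scalemx1.
Qed.

End Key.


Section Fin.
Variable R : rcfType.

Lemma Cinj (x y : R) : x%:C = y%:C -> x = y.
Proof. by move=> /(congr1 (@complex.Re R)). Qed.

Lemma herm_is n (A : 'M[R[i]]_n) : is_hermitian A -> A \is hermsymmx.
Proof.
move=> hA; apply/is_hermitianmxP; rewrite expr0 scale1r.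
apply/matrixP => a b; have := congr1 (fun M : 'M_n => M b a) hA.
by rewrite !mxE.
Qed.

Lemma mulJ_real (x : R[i]) :
  x * conjC x = ((complex.Re x) ^+ 2 + (complex.Im x) ^+ 2)%:C.
Proof.
have -> : x * conjC x = x * (x^*)%C by [].
rewrite -sqr_normc normc_def -rmorphXn /= sqr_sqrtr //.
by rewrite addr_ge0 // sqr_ge0.
Qed.

Lemma wC (x : R[i]) : (complex.Re (x * conjC x))%:C = x * conjC x.
Proof. by rewrite mulJ_real. Qed.

Lemma w_ge0 (x : R[i]) : 0 <= complex.Re (x * conjC x).
Proof. by rewrite mulJ_real /= addr_ge0 // sqr_ge0. Qed.

Lemma real_repr (s : seq R) k (v : 'I_k -> R[i]) :
  perm_eq (map (fun x => x%:C) s) [seq v m | m <- enum 'I_k] ->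
  (forall m, (complex.Re (v m))%:C = v m) /\
  perm_eq s [seq complex.Re (v m) | m <- enum 'I_k].
Proof.
move=> h.
have hm : forall m, (complex.Re (v m))%:C = v m.
  move=> m; have : v m \in map (fun x => x%:C) s.
    by rewrite (perm_mem h) map_f // mem_enum.
  by case/mapP => x _ ->.
split => //.
apply: (@perm_map_inj _ _ (fun x : R => x%:C)); first by move=> x y; apply: Cinj.
by rewrite -map_comp (eq_map hm).
Qed.

End Fin.

End Helpers.
Import Helpers.

Theorem lemma4p3 (R : rcfType) (n : nat) (A : 'M[R[i]]_n)
  (lam : seq R) (mu : 'I_n -> seq R) :
  (2 <= n)%N ->
  is_hermitian A ->
  eigenvalues_of A lam ->
  (forall i : 'I_n, eigenvalues_of (del_sub A i) (mu i)) ->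
  majorizes (flatten (nseq n.-1 lam)) (flatten [seq mu i | i <- enum 'I_n]).
Proof.
move=> n2 hA hlam hmu.
have AH := herm_is hA.
have spec : forall k (B : 'M[R[i]]_k), B \is hermsymmx -> forall s : seq R,
    eigenvalues_of B s ->
    (forall m, ((complex.Re (spectral_diag B 0 m))%:C)%C = spectral_diag B 0 m) /\
    perm_eq s [seq complex.Re (spectral_diag B 0 m) | m <- enum 'I_k].
  move=> k B hB s hs; apply: real_repr.
  have /orthomx_spectralP BE := hermitian_normalmx hB.
  apply: (eig_diag (spectral_unit B)); rewrite -BE hs big_map //.
have [dre plam] := spec _ _ AH _ hlam.
have hmu' := fun i => spec _ _ (herm_del i AH) _ (hmu i).
apply: (@abstract_maj _ n n.-1 n.-1 _ lam
   (fun m => complex.Re (spectral_diag A 0 m)) mu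
   (fun i j => complex.Re (spectral_diag (del_sub A i) 0 j))
   (fun i j m => complex.Re (Mi A i j m * Num.conj (Mi A i j m)))).
- by rewrite card_ord mulnC.
- exact: plam.
- by move=> i; case: (hmu' i).
- by move=> i j m; apply: w_ge0.
- move=> i j; apply: Cinj; rewrite rmorph_sum /=.
  under eq_bigr do rewrite wC.
  by rewrite -E2 K2 mxE eqxx.
- move=> m; apply: Cinj; rewrite rmorph_sum /=.
  under eq_bigr do rewrite rmorph_sum /=.
  under eq_bigr do under eq_bigr do rewrite wC.
  under eq_bigr do rewrite -E3.
  by rewrite -summxE (K3 A) mxE eqxx rmorph_nat.
- move=> i j; apply: Cinj; have [dre' _] := hmu' i.
  rewrite dre' rmorph_sum /=.
  have -> : spectral_diag (del_sub A i) 0 j =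
      diag_mx (spectral_diag (del_sub A i)) j j by rewrite mxE eqxx.
  rewrite (K1 AH) E1; apply: eq_bigr => m _.
  by rewrite rmorphM /= wC dre.
Qed.
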